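(* Let $\Omega\subset\mathbb{R}^{+}$ be measurable and $\nu\ge0$. Then $\Omega$ is $\mu_\nu$-thick if and only if $\Omega$ is thick.
   Context: Let $d\mu_\nu(y)=y^{2\nu+1}dy$ on $\mathbb{R}^{+}$. A measurable $\Omega\subset\mathbb{R}^{+}$ is $\mu_\nu$-thick if there exist $r>0$, $L>0$ with $\mu_\nu(\Omega\cap[x,x+L])\ge r\,\mu_\nu([x,x+L])$ for all $x\ge0$. It is thick if there exist $\gamma>0$, $L>0$ with $|\Omega\cap[x,x+L]|\ge\gamma L$ for all $x\ge0$ ($|\cdot|$ = Lebesgue measure). *)

(* Defs.v *)
From mathcomp Require Import all_boot all_order all_algebra.
From mathcomp Require Import all_classical all_reals all_analysis.
Set Implicit Arguments. Unset Strict Implicit. Unset Printing Implicit Defensive.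
Import Order.TTheory GRing.Theory Num.Theory.
Local Open Scope classical_set_scope.
Local Open Scope ring_scope.

(* The type R equipped with the sigma-algebra of Lebesgue-measurable sets
   (the Caratheodory / completed sigma-algebra of Lebesgue measure). *)
Definition LebR (R : realType) :=
  caratheodory_type (R := R) (wlength (R := R) idfun)^*%mu.

Definition Lmeasurable {R : realType} (A : set R) : Prop :=
  measurable (A : set (LebR R)).

Definition leb {R : realType} (A : set R) : \bar R :=
  @completed_lebesgue_measure R A.

Definition mu_nu {R : realType} (nu : R) (A : set R) : \bar R :=
  (\int[@completed_lebesgue_measure R]_(y in (A : set (LebR R)))
      (y `^ (2 * nu + 1))%:E)%E.

Definition mu_thick {R : realType} (nu : R) (Omega : set R) : Prop :=
  exists r : R, exists L : R, 0 < r /\ 0 < L /\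
    forall x : R, 0 <= x ->
      (r%:E * mu_nu nu [set` `[x, x + L]%R] <= mu_nu nu (Omega `&` [set` `[x, x + L]%R]))%E.

Definition thick {R : realType} (Omega : set R) : Prop :=
  exists gamma : R, exists L : R, 0 < gamma /\ 0 < L /\
    forall x : R, 0 <= x ->
      ((gamma * L)%:E <= leb (Omega `&` [set` `[x, x + L]%R]))%E.

(* Main.v *)
Set Warnings "-all".
Require Import Defs.
From mathcomp Require Import all_boot all_order all_algebra.
From mathcomp Require Import all_classical all_reals all_analysis.
From mathcomp Require Import measurable_realfun.
From mathcomp Require Import lra ring.
Import Order.TTheory GRing.Theory Num.Theory.
Local Open Scope classical_set_scope.
Local Open Scope ring_scope.
Section S.
Variable R : realType.
Lemma borel_leb (A : set R) : measurable A -> Lmeasurable A.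
Proof. move=> mA. rewrite /Lmeasurable. exact: sub_caratheodory. Qed.
Lemma leb_itv (x y : R) : x <= y -> leb [set` `[x, y]] = (y - x)%:E.
Proof. move=> xy. rewrite /leb. have -> : @completed_lebesgue_measure R [set` `[x, y]] = lebesgue_measure [set` `[x, y]] by [].
rewrite lebesgue_measure_itv /= lte_fin; move: xy; rewrite le_eqVlt => /orP[/eqP <-|->]; rewrite ?ltxx ?subrr ?EFinB //. Qed.

Lemma borel_fun_leb (D : set (LebR R)) (f : R -> \bar R) :
  measurable_fun [set: R] f -> measurable_fun D f.
Proof.
move=> mf mD Y mY; apply: measurableI => //.
have := mf measurableT Y mY; rewrite setTI => h.
by apply: sub_caratheodory; exact: h.
Qed.

Lemma mw (D : set (LebR R)) (a : R) : measurable_fun D (fun y : R => (y `^ a)%:E).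
Proof.
apply: borel_fun_leb. apply: measurableT_comp => //. 
Qed.

Lemma mc (D : set (LebR R)) (c : \bar R) : measurable_fun D (cst c : R -> \bar R).
Proof. apply: borel_fun_leb; exact: measurable_cst. Qed.

Lemma mu_nu_bounds (nu x y : R) (D : set R) : 0 <= nu -> 0 <= x ->
  Lmeasurable D -> D `<=` [set` `[x, y]] ->
  ((x `^ (2 * nu + 1))%:E * leb D <= mu_nu nu D)%E /\
  (mu_nu nu D <= (y `^ (2 * nu + 1))%:E * leb D)%E.
Proof.
move=> nu0 x0 mD Dxy.
have mono : forall z, D z -> x <= z <= y.
  by move=> z /Dxy /=; rewrite in_itv.
have a0 : 0 <= 2 * nu + 1 by rewrite addr_ge0 // mulr_ge0.
rewrite /leb /mu_nu -!(integral_cst _ mD); split.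
- apply: ge0_le_integral => //; try exact: mw; try exact: mc.
  + by move=> z _; rewrite lee_fin powR_ge0.
  + move=> z /mono /andP[xz _]; rewrite lee_fin; apply: ge0_ler_powR => //;
     rewrite nnegrE //; exact: le_trans x0 xz.
- apply: ge0_le_integral => //; try exact: mw; try exact: mc.
  + by move=> z _; rewrite lee_fin powR_ge0.
  + move=> z /mono /andP[xz zy]; rewrite lee_fin; apply: ge0_ler_powR => //;
     rewrite nnegrE //; [exact: le_trans x0 xz | exact: le_trans x0 (le_trans xz zy)].
Qed.

Lemma ratio (nu x L : R) : 0 <= nu -> 0 <= x -> 0 <= L ->
  (x + L + L) `^ (2 * nu + 1) <= 2 `^ (2 * nu + 1) * (x + L) `^ (2 * nu + 1).
Proof.
move=> nu0 x0 L0; have a0 : 0 <= 2 * nu + 1 by rewrite addr_ge0 // mulr_ge0.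
rewrite -powRM //; last by rewrite addr_ge0.
apply: ge0_ler_powR => //; rewrite ?nnegrE.
- by rewrite !addr_ge0.
- by rewrite mulr_ge0 // addr_ge0.
- lra.
Qed.

Lemma mitv (u v : R) : Lmeasurable [set` `[u, v]].
Proof. apply: borel_leb; exact: measurable_itv. Qed.

Lemma mOI (O : set R) (u v : R) : Lmeasurable O -> Lmeasurable (O `&` [set` `[u, v]]).
Proof. move=> mO; apply: measurableI => //; exact: mitv. Qed.

Lemma mu_nu_sub (nu : R) (A B : set R) : Lmeasurable A -> Lmeasurable B -> A `<=` B ->
  (mu_nu nu A <= mu_nu nu B)%E.
Proof.
move=> mA mB AB; rewrite /mu_nu; apply: ge0_subset_integral => //.
- exact: mw.
- by move=> z _; rewrite lee_fin powR_ge0.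
Qed.

Lemma leb_sub (A B : set R) : Lmeasurable A -> Lmeasurable B -> A `<=` B ->
  (leb A <= leb B)%E.
Proof. move=> mA mB AB; rewrite /leb; apply: le_measure => //; rewrite inE //. Qed.

Lemma leb_ge0 (A : set R) : (0 <= leb A)%E.
Proof. exact: measure_ge0. Qed.
End S.

Theorem lemma3p7 (R : realType) (Omega : set R) (nu : R) :
  Omega `<=` `[0, +oo[ -> Lmeasurable Omega -> 0 <= nu ->
  (mu_thick nu Omega <-> thick Omega).
Proof.
move=> _ mO nu0.
set a := 2 * nu + 1.
have a0 : 0 <= a by rewrite /a addr_ge0 // mulr_ge0.
set k := 2 `^ a.
have k0 : 0 < k by rewrite /k powR_gt0.
split.
- move=> [r [L [r0 [L0 H]]]].
  exists (r / (2 * k)), (2 * L); split; first by rewrite divr_gt0 // mulr_gt0.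
  split; first by rewrite mulr_gt0.
  move=> x x0.
  have xL0 : 0 <= x + L by rewrite addr_ge0 // ltW.
  have c10 : 0 < (x + L) `^ a by rewrite powR_gt0 // ltr_pwDr.
  have := H (x + L) xL0.
  have [b1 _] := @mu_nu_bounds R nu (x + L) (x + L + L) _ nu0 xL0 (@mitv R (x + L) (x + L + L)) (@subset_refl _ _).
  have [_ b2] := @mu_nu_bounds R nu (x + L) (x + L + L) _ nu0 xL0 (@mOI R Omega (x + L) (x + L + L) mO) (@subIsetr _ _ _).
  have hsub : (leb (Omega `&` [set` `[(x + L)%R, (x + L + L)%R]]) <= leb (Omega `&` [set` `[x, (x + 2 * L)%R]]))%E.
    apply: leb_sub; [exact: mOI|exact: mOI|].
    move=> z [Oz]; rewrite /= !in_itv /= => /andP[h1 h2]; split => //.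
    apply/andP; split; lra.
  move: b1 b2 hsub.
  rewrite leb_itv; last by rewrite lerDl ltW.
  have -> : x + L + L - (x + L) = L by ring.
  have hr := @ratio R nu x L nu0 x0 (ltW L0).
  have := @leb_ge0 R (Omega `&` [set` `[x + L, x + L + L]]).
  case: (leb (Omega `&` [set` `[x + L, x + L + L]])) => // [m|] m0 b1 b2 hsub Hx.
  + apply: le_trans hsub; rewrite lee_fin.
    have : (r * ((x + L) `^ a * L) <= ((x + L + L) `^ a) * m)%R.
      rewrite -lee_fin EFinM (le_trans _ b2) // (le_trans _ Hx) //.
      by rewrite EFinM lee_wpmul2l // lee_fin ltW.
    move=> h.
    have h2 : r * ((x + L) `^ a * L) <= k * (x + L) `^ a * m.
      apply: le_trans h _; rewrite ler_wpM2r //; by rewrite -lee_fin.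
    have -> : r / (2 * k) * (2 * L) = (r * L) / k.
      by field; rewrite gt_eqF.
    rewrite ler_pdivrMr //.
    rewrite -(@ler_pM2r _ ((x + L) `^ a)) //.
    set c := (x + L) `^ a; have e1 : r * L * c = r * (c * L) by ring.
    have e2 : m * k * c = k * c * m by ring.
    by rewrite e1 e2.
  + by apply: le_trans hsub; rewrite leey.
- move=> [g [L [g0 [L0 H]]]].
  exists (g / (2 * k)), (2 * L); split; first by rewrite divr_gt0 // mulr_gt0.
  split; first by rewrite mulr_gt0.
  move=> x x0.
  have xL0 : 0 <= x + L by rewrite addr_ge0 // ltW.
  have c10 : 0 < (x + L) `^ a by rewrite powR_gt0 // ltr_pwDr.
  have := H (x + L) xL0.
  have [b1 _] := @mu_nu_bounds R nu (x + L) (x + L + L) _ nu0 xL0 (@mOI R Omega (x + L) (x + L + L) mO) (@subIsetr _ _ _).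
  have [_ b2] := @mu_nu_bounds R nu x (x + 2 * L) _ nu0 x0 (@mitv R x (x + 2 * L)) (@subset_refl _ _).
  have hsub : (mu_nu nu (Omega `&` [set` `[(x + L)%R, (x + L + L)%R]]) <= mu_nu nu (Omega `&` [set` `[x, (x + 2 * L)%R]]))%E.
    apply: mu_nu_sub; [exact: mOI|exact: mOI|].
    move=> z [Oz]; rewrite /= !in_itv /= => /andP[h1 h2]; split => //.
    apply/andP; split; lra.
  move: b2; rewrite leb_itv; last by rewrite lerDl mulr_ge0 // ltW.
  have -> : x + 2 * L - x = 2 * L by ring.
  move=> b2 Hx.
  apply: le_trans hsub; apply: le_trans b1.
  apply: le_trans (lee_wpmul2l _ Hx); last first.
    by rewrite lee_fin powR_ge0.
  rewrite -/a in b2 *.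
  apply: le_trans (lee_wpmul2l _ b2) _.
    by rewrite lee_fin ltW // divr_gt0 // mulr_gt0.
  rewrite -!EFinM lee_fin.
  have hr : (x + 2 * L) `^ a <= k * (x + L) `^ a.
    rewrite (_ : x + 2 * L = x + L + L); last by ring.
    exact: (@ratio R nu x L nu0 x0 (ltW L0)).
  set c1 := (x + L) `^ a in hr *; set c2 := (x + 2 * L) `^ a in hr *.
  rewrite (_ : g / (2 * k) * (c2 * (2 * L)) = (g * L * c2) / k); last by field; rewrite gt_eqF.
  rewrite ler_pdivrMr //.
  rewrite (_ : c1 * (g * L) * k = (g * L) * (k * c1)); last by ring.
  by rewrite ler_wpM2l // ltW // mulr_gt0.
Qed.
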